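(* If $\{\mathcal P_1,\dots,\mathcal P_r\}$ is a $(v,\{k_1,\dots,k_r\})$-MOHS on a half-set $V$, then $k_1+\dots+k_r-r\le v-1$, and equality holds if and only if the associated Heffter space $(V,\bigcup_{i=1}^r\mathcal P_i)$ is a linear space, i.e. every two distinct points of $V$ lie in exactly one block of $\bigcup_i\mathcal P_i$.
   Context: A half-set of an abelian group $G$ of odd order $2v+1\ge7$ is a subset $V\subseteq G\setminus\{0\}$ containing exactly one element of each pair $\{g,-g\}$, $g\ne0$. A $(v,k)$ Heffter system on $V$ is a partition of $V$ into blocks of size $k$, each summing to $0$ in $G$. Two Heffter systems on the same half-set are orthogonal if every block of one meets every block of the other in at most one element. A $(v,\{k_1,\dots,k_r\})$-MOHS is a set of pairwise orthogonal Heffter systems $\mathcal P_1,\dots,\mathcal P_r$ on a common half-set of an abelian group of order $2v+1$, with $\mathcal P_i$ a $(v,k_i)$ Heffter system. *)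

(* Defs.v *)
From mathcomp Require Import all_boot all_order all_algebra.
Set Implicit Arguments. Unset Strict Implicit. Unset Printing Implicit Defensive.
Import GRing.Theory.
Local Open Scope ring_scope.

Definition half_set (G : finZmodType) (V : {set G}) : bool :=
  (0 \notin V) && [forall g : G, (g != 0) ==> ((g \in V) (+) (- g \in V))].

Definition heffter_system (G : finZmodType) (V : {set G}) (k : nat)
    (P : {set {set G}}) : bool :=
  partition P V &&
  [forall B in P, (#|B| == k)%N && (\sum_(x in B) x == 0)].

Definition orthogonal_hs (G : finZmodType) (P Q : {set {set G}}) : bool :=
  [forall B in P, forall C in Q, (#|B :&: C| <= 1)%N].

Definition MOHS (G : finZmodType) (v r : nat) (V : {set G})
    (k : 'I_r -> nat) (P : 'I_r -> {set {set G}}) : Prop :=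
  #|G| = (2 * v + 1)%N /\ half_set V /\
  (forall i, heffter_system V (k i) (P i)) /\
  (forall i j, i != j -> orthogonal_hs (P i) (P j)).

Definition linear_space (G : finZmodType) (V : {set G}) (blocks : {set {set G}}) : Prop :=
  forall x y, x \in V -> y \in V -> x != y ->
    #|[set B in blocks | (x \in B) && (y \in B)]| = 1%N.

(* Main.v *)
Require Import Defs.
From mathcomp Require Import all_boot all_order all_algebra.
From mathcomp Require Import zify.
Import GRing.Theory.

Lemma card_disj_bigcup (T : finType) r (F : 'I_r -> {set T}) :
  (forall i j, i != j -> [disjoint F i & F j]) ->
  #|\bigcup_(i < r) F i| = (\sum_(i < r) #|F i|)%N.
Proof.
move=> dis; rewrite -sum1_card (partition_disjoint_bigcup _ _ dis).
by apply: eq_bigr => i _; rewrite sum1_card.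
Qed.

Lemma half_card (G : finZmodType) (V : {set G}) : half_set V ->
  #|G| = (2 * #|V| + 1)%N.
Proof.
case/andP=> V0 /forallP H.
pose W := (@GRing.opp G) @^-1: V.
have cW : #|W| = #|V| by rewrite card_preimset //; apply: oppr_inj.
have dVW : [disjoint V & W].
  apply/pred0P => g /=; rewrite inE; apply/negbTE/negP => /andP[gV gW].
  have g0 : g != 0%R by apply: contraNneq V0 => <-.
  by move: (H g); rewrite g0 gV /=; rewrite gW.
have eU : ~: [set 0%R : G] = V :|: W.
  apply/setP => g; rewrite !inE; case: (eqVneq g 0%R) => [->|g0] /=.
    by rewrite oppr0 (negbTE V0).
  by move: (H g); rewrite g0 /=; case: (g \in V); case: ((- g)%R \in V).
rewrite -(cardsC [set 0%R : G]) cards1 eU.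
have := leq_card_setU V W; rewrite dVW => -[_ /eqP ->].
rewrite cW; lia.
Qed.

Theorem proposition1p10 (G : finZmodType) (v r : nat) (V : {set G})
    (k : 'I_r -> nat) (P : 'I_r -> {set {set G}}) :
  (3 <= v)%N ->
  MOHS v V k P ->
  ((\sum_(i < r) k i)%N <= v - 1 + r)%N /\
  ((\sum_(i < r) k i)%N = (v - 1 + r)%N <-> linear_space V (\bigcup_(i < r) P i)).
Proof.
move=> v3 [cG [hV [HS Ho]]].
have cV : #|V| = v by move: (@half_card G V hV); rewrite cG; lia.
have V0 : (0%R : G) \notin V by case/andP: hV.
have part i : partition (P i) V by case/andP: (HS i).
have blk i B : B \in P i -> #|B| = k i /\ (\sum_(x in B) x = 0)%R.
  move=> BP; case/andP: (HS i) => _ /forall_inP /(_ B BP) /andP[/eqP -> /eqP ->].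
  by [].
have Bx_mem i x : x \in V -> pblock (P i) x \in P i.
  by move=> xV; apply: pblock_mem; rewrite (cover_partition (part i)).
have Bx_in i x : x \in V -> x \in pblock (P i) x.
  by move=> xV; rewrite mem_pblock (cover_partition (part i)).
have Bx_def i x B : B \in P i -> x \in B -> B = pblock (P i) x.
  by move=> BP xB; rewrite (def_pblock (partition_trivIset (part i)) BP xB).
have sub i B : B \in P i -> B \subset V.
  move=> BP; rewrite -(cover_partition (part i)); exact: bigcup_sup.
have k2 i x : x \in V -> (2 <= k i)%N.
  move=> xV; have [cB sB] := blk i _ (Bx_mem i x xV).
  rewrite -cB; case: (ltnP 1 #|pblock (P i) x|) => // c1.
  have xB := Bx_in i x xV.
  have c0 : (0 < #|pblock (P i) x|)%N by apply/card_gt0P; exists x.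
  have /cards1P [y ey] : #|pblock (P i) x| == 1%N by apply/eqP; lia.
  move: xB sB; rewrite ey inE => /eqP <-; rewrite big_set1 => x0.
  by move: xV; rewrite x0 (negbTE V0).
have inter i j x : x \in V -> i != j ->
   pblock (P i) x :&: pblock (P j) x = [set x].
  move=> xV ij; apply/eqP; rewrite eq_sym eqEcard sub1set inE !Bx_in // cards1 /=.
  by move: (Ho i j ij) => /forall_inP /(_ _ (Bx_mem i x xV)) /forall_inP /(_ _ (Bx_mem j x xV)).
pose S x i := pblock (P i) x :\ x.
have Sdis x : x \in V -> forall i j, i != j -> [disjoint S x i & S x j].
  move=> xV i j ij; rewrite -setI_eq0; apply/eqP/setP => y.
  have := inter i j x xV ij => /setP /(_ y); rewrite /S !inE.
  by case: (y == x); case: (y \in pblock (P i) x); case: (y \in pblock (P j) x).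
have Scard x i : x \in V -> #|S x i| = (k i - 1)%N.
  move=> xV; have := cardsD1 x (pblock (P i) x); rewrite Bx_in // (blk i _ (Bx_mem i x xV)).1.
  rewrite /S; lia.
have Ssub x : x \in V -> \bigcup_(i < r) S x i \subset V :\ x.
  move=> xV; apply/bigcupsP => i _; apply: setSD; apply: sub (Bx_mem i x xV).
have sumE x : x \in V -> (\sum_(i < r) k i)%N = (#|\bigcup_(i < r) S x i| + r)%N.
  move=> xV; rewrite card_disj_bigcup; last exact: Sdis.
  rewrite -[in X in _ = (_ + X)%N](card_ord r) -sum1_card -big_split /=.
  by apply: eq_bigr => i _; rewrite Scard //; have := k2 i x xV; lia.
have cVx x : x \in V -> #|V :\ x| = (v - 1)%N.
  by move=> xV; rewrite (cardsD1 x V) xV in cV; lia.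
have key x : x \in V -> ((\sum_(i < r) k i)%N = (v - 1 + r)%N <->
                         \bigcup_(i < r) S x i = V :\ x).
  move=> xV; rewrite (sumE x xV) -(cVx x xV); split.
    move=> e; apply/eqP; rewrite eqEcard Ssub //; lia.
  by move=> ->.
have [x xV] : exists x, x \in V.
  by apply/set0Pn; rewrite -card_gt0 cV; lia.
split.
  rewrite (sumE x xV); have := subset_leq_card (Ssub x xV); rewrite cVx //; lia.
have blocks y : y \in V -> forall z, z != y -> forall B,
   B \in \bigcup_(i < r) P i -> y \in B -> z \in B ->
   exists i, B = pblock (P i) y /\ z \in S y i.
  move=> yV z zy B /bigcupP [i _ BP] yB zB; exists i.
  have e := Bx_def i y B BP yB; split => //; by rewrite /S !inE zy -e.
split.
  move=> e x1 y1 x1V y1V xy.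
  have := (key x1 x1V).1 e => eU.
  have : y1 \in V :\ x1 by rewrite !inE y1V eq_sym xy.
  rewrite -eU => /bigcupP [j _ yS].
  apply/eqP/cards1P; exists (pblock (P j) x1); apply/setP => B; rewrite !inE.
  apply/idP/idP.
    move=> /and3P [BU x1B y1B].
    have [i [-> yi]] := blocks x1 x1V y1 ltac:(by rewrite eq_sym) B BU x1B y1B.
    have [<-|ij] := eqVneq i j => //.
    by have := Sdis x1 x1V i j ij => /disjointFr /(_ yi); rewrite yS.
  move=> /eqP ->; rewrite Bx_in //; move: yS; rewrite !inE => /andP[_ ->].
  by apply/andP; split => //; apply/bigcupP; exists j => //; apply: Bx_mem.
move=> L; apply/(key x xV); apply/eqP; rewrite eqEsubset Ssub //=.
apply/subsetP => y; rewrite !inE => /andP [yx yV].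
have := L x y xV yV ltac:(by rewrite eq_sym).
move/eqP/cards1P => [B eB]; have : B \in [set B | B \in \bigcup_(i < r) P i & (x \in B) && (y \in B)].
  by rewrite eB inE.
rewrite inE => /and3P [BU xB yB].
have [i [_ yi]] := blocks x xV y yx B BU xB yB.
by apply/bigcupP; exists i.
Qed.
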